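(* Let $G$ be a connected oriented graph derived from a Burling tree $(T,r,\ell,c)$, and suppose that $G$ has no cut vertex and no vertex of degree at most $1$. Let $S$ be the top-set of $G$. Then: (i) $G[S]$ is an in-star with at least two leaves (so $G$ has a unique pivot and its in-neighbors in $G[S]$ are the antennas of $G$); (ii) all vertices of $S\setminus\{v\}$ are sources of $G$, where $v$ is the unique sink of $G[S]$; (iii) the pivot of $G$ is an ancestor in $T$ of all vertices of $V(G)\setminus S$.
   Context: Oriented graphs are finite, without loops, multiple arcs or pairs of opposite arcs; connectivity, degree and cut vertices refer to the underlying graph. In a rooted tree $T$ with root $r$, each non-root vertex $v$ has a parent $p(v)$; children, leaves, ancestors and descendants are as usual. A branch is a sequence $v_1\dots v_k$ ($k\ge0$) with $v_i$ the parent of $v_{i+1}$; it starts at $v_1$. A Burling tree is a 4-tuple $(T,r,\ell,c)$: $T$ a rooted tree with root $r$; $\ell$ assigns to each non-leaf vertex $v$ one of its children $\ell(v)$ (the last-born of $v$); $c$ assigns to every vertex $v$ that is neither the root nor a last-born the vertex-set of a (possibly empty) branch starting at $\ell(p(v))$, and $c(v)=\emptyset$ if $v$ is the root or a last-born. The oriented graph fully derived from it has vertex-set $V(T)$ and an arc $uv$ iff $v\in c(u)$; an oriented graph is derived from the Burling tree if it is an induced subgraph of the fully derived one. The top-set of $G$ (with respect to $T$) is the set of vertices $v$ of $G$ such that $v$ is the only vertex of $G$ on the branch of $T$ from $r$ to $v$. A pivot of $G$ is a sink of $G[S]$ and an antenna of $G$ is a source of $G[S]$, where $S$ is the top-set.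 An in-tree is an oriented graph obtained from a rooted tree by orienting every edge towards the root; an in-star is an in-tree whose unique sink is adjacent to all other vertices; its leaves are its vertices other than the sink. *)

(* Defs.v *)
From mathcomp Require Import all_boot.
Set Implicit Arguments.
Unset Strict Implicit.
Unset Printing Implicit Defensive.

Section Burling.
Variable V : finType.

(* The tree edges are {v, par v} for v <> r. *)
Definition rooted_tree (r : V) (par : V -> V) : Prop :=
  par r = r /\ forall v, fconnect par v r.

Definition anceq (par : V -> V) (u v : V) : bool := fconnect par v u.
Definition anc (par : V -> V) (u v : V) : bool := (u != v) && anceq par u v.

Definition is_child (r : V) (par : V -> V) (w v : V) : bool :=
  (w != r) && (par w == v).

Definition is_last_born (r : V) (par lb : V -> V) (v : V) : bool :=
  (v != r) && (lb (par v) == v).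

Definition branch_set (par : V -> V) (a : V) (B : {set V}) : Prop :=
  B = set0 \/
  exists w, anceq par a w /\ B = [set x | anceq par a x && anceq par x w].

(* Burling tree (T, r, l, c); lb is the last-born function (its value on
   leaves is irrelevant), c the function c. *)
Definition burling_tree (r : V) (par lb : V -> V) (c : V -> {set V}) : Prop :=
  [/\ rooted_tree r par,
      (forall v, (exists w, is_child r par w v) -> is_child r par (lb v) v) &
      (forall v, if (v == r) || is_last_born r par lb v then c v = set0
                 else branch_set par (lb (par v)) (c v))].

(* ---------- the derived oriented graph G = (fully derived graph)[X] ---------- *)
Definition arc (c : V -> {set V}) (X : {set V}) (u v : V) : bool :=
  [&& u \in X, v \in X & v \in c u].

Definition gadj (c : V -> {set V}) (X : {set V}) : rel V :=
  fun u v => arc c X u v || arc c X v u.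

Definition degree (c : V -> {set V}) (X : {set V}) (x : V) : nat :=
  #|[set y in X | gadj c X x y]|.

Definition connected_graph (c : V -> {set V}) (X : {set V}) : Prop :=
  X != set0 /\ {in X &, forall u v, connect (gadj c X) u v}.

(* x is a cut vertex of G: deleting x increases the number of components,
   i.e. some two vertices of G - x connected in G are disconnected in G - x *)
Definition cut_vertex (c : V -> {set V}) (X : {set V}) (x : V) : Prop :=
  x \in X /\
  exists u w, [/\ u \in X :\ x, w \in X :\ x, connect (gadj c X) u w &
                  ~~ connect (gadj c (X :\ x)) u w].

Definition top_set (par : V -> V) (X : {set V}) : {set V} :=
  [set v in X | [forall u, anc par u v ==> (u \notin X)]].

(* sinks / sources of the induced subgraph G[A] (arcs of G[A] = arcs of G
   between vertices of A) *)
Definition sink_in (c : V -> {set V}) (X A : {set V}) (x : V) : bool :=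
  (x \in A) && [forall y, (y \in A) ==> ~~ arc c X x y].
Definition source_in (c : V -> {set V}) (X A : {set V}) (x : V) : bool :=
  (x \in A) && [forall y, (y \in A) ==> ~~ arc c X y x].

Definition pivot (par : V -> V) (c : V -> {set V}) (X : {set V}) (x : V) :=
  sink_in c X (top_set par X) x.
Definition antenna (par : V -> V) (c : V -> {set V}) (X : {set V}) (x : V) :=
  source_in c X (top_set par X) x.

(* G[A] is an in-star with sink s: the underlying graph of G[A] is a star
   centred at s (adjacent to all other vertices of A, no other edges), and
   all edges are oriented towards s.  Its leaves are A :\ s. *)
Definition in_star_with_sink (c : V -> {set V}) (X A : {set V}) (s : V) : Prop :=
  s \in A /\
  {in A &, forall x y, arc c X x y = (x != s) && (y == s)}.

End Burling.

(* Main.v *)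
Require Import Defs.
From mathcomp Require Import all_boot.
Set Implicit Arguments. Unset Strict Implicit. Unset Printing Implicit Defensive.

Section Main.
Variable V : finType.
Variables (r : V) (par lb : V -> V) (c : V -> {set V}) (X : {set V}).
Hypothesis Hbt : burling_tree r par lb c.

Local Notation anq := (anceq par).

Lemma ancP u v : reflect (exists n, iter n par v = u) (anq u v).
Proof.
apply: (iffP idP); first by move=> H; exists (findex par v u); exact: iter_findex.
by case=> n <-; exact: fconnect_iter.
Qed.

Lemma anc_refl u : anq u u.
Proof. exact: connect0. Qed.

Lemma anc_trans a b d : anq a b -> anq b d -> anq a d.
Proof. move=> H1 H2; exact: (connect_trans H2 H1). Qed.

Lemma anc_par v : anq (par v) v.
Proof. exact: fconnect1. Qed.

Lemma anc_step a b : anq a b -> a != b -> anq a (par b).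
Proof.
case/ancP=> [[|n]] <-; first by rewrite eqxx.
by rewrite iterSr => _; apply/ancP; exists n.
Qed.

Lemma rooted : rooted_tree r par.
Proof. by case: Hbt. Qed.

Lemma iter_r n : iter n par r = r.
Proof. case: rooted => H _; elim: n => //= n ->; exact: H. Qed.

Lemma par_fix a : par a = a -> a = r.
Proof.
move=> H; case: rooted => _ /(_ a) /ancP [n <-].
by elim: n => //= n <-; rewrite H.
Qed.

Lemma anc_antisym a b : anq a b -> anq b a -> a = b.
Proof.
case/ancP=> i Hi; case/ancP=> j Hj.
have Hk : forall m, iter ((j + i) * m) par b = b.
  elim=> [|m IH]; first by rewrite muln0.
  by rewrite mulnS iterD IH iterD Hi Hj.
case: rooted => _ /(_ b) /ancP [n Hn].
case E: (j + i) => [|k].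
  by move: E => /eqP; rewrite addn_eq0 => /andP [_ /eqP Ei]; rewrite -Hi Ei.
have Hb : b = r.
  have := Hk n; rewrite E.
  have -> : k.+1 * n = (k.+1 * n - n) + n by rewrite subnK // leq_pmull.
  by rewrite iterD Hn iter_r => <-.
by rewrite -Hi Hb iter_r.
Qed.

Lemma anc_comp a b w : anq a w -> anq b w -> anq a b || anq b a.
Proof.
case/ancP=> i Hi; case/ancP=> j Hj.
case: (leqP i j) => Hij.
  apply/orP; right; apply/ancP; exists (j - i).
  by rewrite -Hi -iterD subnK.
apply/orP; left; apply/ancP; exists (i - j).
by rewrite -Hj -iterD subnK // ltnW.
Qed.

Definition dep v := #|[set u | anq u v]|.

Lemma dep_le a b : anq a b -> dep a <= dep b.
Proof.
move=> H; apply: subset_leq_card; apply/subsetP => u; rewrite !inE => Hu.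
exact: anc_trans Hu H.
Qed.

Lemma dep_lt a b : anq a b -> a != b -> dep a < dep b.
Proof.
move=> H Hne; apply: proper_card; apply/properP; split.
  apply/subsetP => u; rewrite !inE => Hu; exact: anc_trans Hu H.
exists b; rewrite !inE ?anc_refl //; apply: contra Hne => Hb.
by rewrite (anc_antisym H Hb).
Qed.


Local Notation P u := (lb (par u)).

Lemma arc_info u w : w \in c u ->
  [/\ u != r, par (P u) = par u, P u != u, P u != r &
      exists w0, c u = [set x | anq (P u) x && anq x w0]].
Proof.
case: Hbt => _ Hlb Hc Hw.
have := Hc u; case: ifP => [_ E|]; first by rewrite E inE in Hw.
move/negbT/norP => [Hur HP] Hb.
rewrite /is_last_born in HP.
rewrite Hur /= in HP.
case: Hb => [E|[w0 [_ E]]]; first by rewrite E inE in Hw.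
have : is_child r par (P u) (par u).
  by apply: Hlb; exists u; rewrite /is_child Hur eqxx.
by case/andP=> HPr /eqP HPp; split => //; exists w0.
Qed.

Lemma arc_P u w : w \in c u -> anq (P u) w.
Proof.
move=> Hw; case: (arc_info Hw) => _ _ _ _ [w0 E].
by move: Hw; rewrite E inE => /andP [].
Qed.

Lemma sib_incomp a b : par a = par b -> a != b -> a != r -> ~~ anq a b.
Proof.
move=> Hp Hne Hr; apply/negP => H.
have H1 := anc_step H Hne; rewrite -Hp in H1.
have := anc_antisym H1 (anc_par a) => /esym /par_fix.
by move/eqP; rewrite (negbTE Hr).
Qed.

Lemma P_incomp u w : w \in c u -> ~~ anq u (P u) /\ ~~ anq (P u) u.
Proof.
move=> Hw; case: (arc_info Hw) => Hur HPp HPu HPr _; split.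
  apply: sib_incomp => //; by rewrite eq_sym.
exact: sib_incomp.
Qed.

Lemma arc_not_anc u w : w \in c u -> ~~ anq u w /\ ~~ anq w u.
Proof.
move=> Hw; have HP := arc_P Hw; case: (P_incomp Hw) => H1 H2; split.
  apply/negP => H; case/orP: (anc_comp H HP) => H3.
    by rewrite H3 in H1.
  by rewrite H3 in H2.
apply/negP => H; have := anc_trans HP H; by rewrite (negbTE H2).
Qed.

Local Notation S := (top_set par X).

Lemma S_X x : x \in S -> x \in X.
Proof. by rewrite inE => /andP []. Qed.

Lemma S_anti x y : x \in S -> y \in X -> anq y x -> y = x.
Proof.
rewrite inE => /andP [_ /forallP /(_ y)] H Hy Hyx.
apply/eqP; apply: contraT => Hne.
by move: H; rewrite /anc Hne Hyx Hy.
Qed.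

Lemma top_ex w : w \in X -> exists2 t, t \in S & anq t w.
Proof.
move=> Hw.
case: (@arg_minnP _ w (fun u => (u \in X) && anq u w) dep).
  by rewrite Hw anc_refl.
move=> t /andP [Ht Htw] Hmin; exists t => //.
rewrite inE Ht /=; apply/forallP => u; apply/implyP => /andP [Hne Hut].
apply/negP => Hu.
have := Hmin u; rewrite Hu (anc_trans Hut Htw) => /(_ isT).
by rewrite leqNgt (dep_lt Hut Hne).
Qed.

Lemma top_uniq t1 t2 w : t1 \in S -> t2 \in S -> anq t1 w -> anq t2 w -> t1 = t2.
Proof.
move=> H1 H2 H1w H2w; case/orP: (anc_comp H1w H2w) => H.
  exact: S_anti H2 (S_X H1) H.
by apply/esym; exact: S_anti H1 (S_X H2) H.
Qed.

Local Notation arcX := (Defs.arc c X).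

Lemma arcE (u w : V) : arcX u w -> [/\ u \in X, w \in X & w \in c u].
Proof. by case/and3P. Qed.

Lemma cross (u w x y : V) : arcX u w -> x \in S -> y \in S -> anq x u -> anq y w ->
  x != y -> u = x.
Proof.
case/arcE=> Hu Hw Hc Hx Hy Hxu Hyw Hxy.
apply/eqP; apply: contraT => Hne; exfalso.
have Hxp : anq x (par u).
  have Hxu' : x != u by rewrite eq_sym.
  exact: (anc_step Hxu Hxu').
case: (arc_info Hc) => _ HPp _ _ _.
have HP := arc_P Hc.
have case1 : anq (P u) y -> False.
  move=> H; have H2 : anq (par u) y by rewrite -HPp; apply: anc_trans (anc_par _) H.
  have := S_anti Hy (S_X Hx) (anc_trans Hxp H2); by move/eqP; rewrite (negbTE Hxy).
case/orP: (anc_comp HP Hyw) => H; first exact: case1.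
case: (eqVneq y (P u)) => [E|Hne2]; first by apply: case1; rewrite -E anc_refl.
have := anc_step H Hne2; rewrite HPp => H3.
case/orP: (anc_comp Hxp H3) => H4.
  have := S_anti Hy (S_X Hx) H4; by move/eqP; rewrite (negbTE Hxy).
have := S_anti Hx (S_X Hy) H4; by move/eqP; rewrite eq_sym (negbTE Hxy).
Qed.

Lemma L3 (u w1 w2 y1 y2 : V) : arcX u w1 -> arcX u w2 -> y1 \in S -> y2 \in S ->
  anq y1 w1 -> anq y2 w2 -> y1 = y2.
Proof.
case/arcE=> _ _ H1; case/arcE=> _ _ H2 Hy1 Hy2 Hyw1 Hyw2.
case: (arc_info H1) => _ _ _ _ [w0 E].
move: H1 H2; rewrite E !inE => /andP [_ H1] /andP [_ H2].
case/orP: (anc_comp H1 H2) => H.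
  exact: top_uniq Hy1 Hy2 (anc_trans Hyw1 H) Hyw2.
exact: top_uniq Hy1 Hy2 Hyw1 (anc_trans Hyw2 H).
Qed.

Lemma F_dep (x y w w' : V) : x \in S -> y \in S -> arcX x w -> anq y w -> arcX y w' ->
  dep (par x) < dep (par y).
Proof.
move=> Hx Hy Hxw Hyw Hyw'.
case/arcE: (Hxw) => _ _ Hc; case/arcE: (Hyw') => _ _ Hc'.
case: (arc_info Hc) => Hxr HPp HPx HPr _.
have HP := arc_P Hc.
have Hyx : y != x.
  apply/negP => /eqP E; subst y; by case: (arc_not_anc Hc) => /negP.
case: (eqVneq y (P x)) => [E|Hne].
  exfalso.
  have Hl : is_last_born r par lb y.
    apply/andP; split; first by rewrite E.
    by apply/eqP; rewrite [in par y]E HPp; apply/esym.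
  case: Hbt => _ _ /(_ y); rewrite Hl orbT.
  by move=> E2; rewrite E2 inE in Hc'.
case/orP: (anc_comp HP Hyw) => H.
  have H2 : P x != y by rewrite eq_sym.
  have H3 := anc_step H H2.
  have H4 : par (P x) != P x by apply/negP => /eqP /par_fix /eqP; rewrite (negbTE HPr).
  have := dep_lt (anc_par (P x)) H4; rewrite HPp => H5.
  exact: leq_trans H5 (dep_le H3).
have := anc_trans (anc_step H Hne) _.
rewrite HPp => /(_ _ (anc_par x)) H1.
by have := S_anti Hx (S_X Hy) H1 => /eqP; rewrite (negbTE Hyx).
Qed.

Lemma closed_conn (e : rel V) (Z : {set V}) u w :
  (forall a b, a \in Z -> e a b -> b \in Z) -> connect e u w -> u \in Z -> w \in Z.
Proof.
move=> H /connectP [p Hp ->]; elim: p u Hp => //= a p IH u /andP [Hua Hp] Hu.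
exact: IH Hp (H _ _ Hu Hua).
Qed.

Lemma arcD (y a b : V) : Defs.arc c (X :\ y) a b -> [/\ arcX a b, a != y & b != y].
Proof.
rewrite /Defs.arc !inE => /and3P [/andP [Hay HaX] /andP [Hby HbX] Hc].
by split => //; rewrite /Defs.arc HaX HbX Hc.
Qed.

Lemma arc_in_S (t y : V) : arcX t y -> y \in S -> t \in S.
Proof.
move=> Hty Hy; case/arcE: (Hty) => HtX _ Hc.
case: (top_ex HtX) => s Hs Hst.
case: (eqVneq s y) => [E|Hne].
  by subst s; case: (arc_not_anc Hc) => _ /negP.
by rewrite (cross Hty Hs Hy Hst (anc_refl y) Hne).
Qed.

Definition Fb (x y : V) := [exists w, arcX x w && anq y w].
Definition hasout (x : V) := [exists w, arcX x w].
Definition good (x : V) := (forall t, ~~ arcX t x) /\ (forall u, u \in X -> anq x u -> u = x).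

Hypothesis Hconn : connected_graph c X.
Hypothesis Hnocut : forall x, ~ cut_vertex c X x.

Lemma goodA n y : dep (par y) < n -> y \in S -> hasout y -> good y.
Proof.
elim: n y => [//|n IH] y Hlt Hy /existsP [w Hyw].
rewrite ltnS in Hlt.
have IH' : forall x, x \in S -> Fb x y -> good x.
  move=> x Hx /existsP [w1 /andP [Hxw1 Hyw1]]; apply: (IH x _ Hx).
    exact: leq_trans (F_dep Hx Hy Hxw1 Hyw1 Hyw) Hlt.
  by apply/existsP; exists w1.
have HyX := S_X Hy.
set Z := [set u in X | (anq y u && (u != y)) || ((u \in S) && Fb u y)].
have Zfalse : forall z0, z0 \in Z -> False.
  move=> z0 Hz0.
  case/arcE: (Hyw) => _ HwX Hc.
  have Hyw_n : ~~ anq y w by case: (arc_not_anc Hc).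
  have HwZ : w \notin Z.
    rewrite inE HwX (negbTE Hyw_n) /=; apply/negP => /andP [HwS /existsP [w2 /andP [Hww2 Hyw2]]].
    have H1 := F_dep Hy HwS Hyw (anc_refl w) Hww2.
    have H2 := F_dep HwS Hy Hww2 Hyw2 Hyw.
    by rewrite ltnNge (ltnW H2) in H1.
  have Hz0X : z0 \in X by move: Hz0; rewrite inE => /andP [].
  have Hz0y : z0 != y.
    move: Hz0; rewrite inE => /andP [_ /orP [/andP [_ ->] //|/andP [_ /existsP [w2 /andP [Hyw2 Hyw2']]]]].
    apply/negP => /eqP E; subst z0.
    by case/arcE: Hyw2 => _ _ /arc_not_anc [] /negP.
  have Hwy : w != y by apply/negP => /eqP E; rewrite E anc_refl in Hyw_n.
  have HC : cut_vertex c X y; last exact: (Hnocut HC).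
  split => //; exists z0, w; split.
  - by rewrite in_setD1 Hz0y Hz0X.
  - by rewrite in_setD1 Hwy HwX.
  - by case: Hconn => _; apply.
  apply/negP => Hcon; move: HwZ; rewrite (closed_conn _ Hcon Hz0) //.
  move=> a b Ha Hab.
  have HaZ := Ha; move: Ha; rewrite inE => /andP [HaX /orP [/andP [Hya Hay] | /andP [HaS HFa]]].
  - case/orP: Hab => /arcD [Hab' Ha' Hb'].
    + case/arcE: (Hab') => _ HbX _.
      case: (top_ex HbX) => t Ht Htb.
      case: (eqVneq t y) => [E|Hne].
        by subst t; rewrite inE HbX Htb Hb'.
      have Hyt : y != t by rewrite eq_sym.
      have E := cross Hab' Hy Ht Hya Htb Hyt.
      by rewrite E eqxx in Hay.
    + case/arcE: (Hab') => HbX _ _.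
      case: (top_ex HbX) => t Ht Htb.
      case: (eqVneq t y) => [E|Hne].
        by subst t; rewrite inE HbX Htb Ha'.
      have E := cross Hab' Ht Hy Htb Hya Hne; subst b.
      rewrite inE HbX Ht /=; apply/orP; right; apply/existsP; exists a.
      by rewrite Hab' Hya.
  - case/orP: Hab => /arcD [Hab' Ha' Hb'].
    + case/arcE: (Hab') => _ HbX _.
      case: (top_ex HbX) => t Ht Htb.
      move/existsP: HFa => [w1 /andP [Haw1 Hyw1]].
      have E := L3 Haw1 Hab' Hy Ht Hyw1 Htb; subst t.
      by rewrite inE HbX Htb Hb'.
    + by case: (IH' a HaS HFa) => /(_ b) /negP.
split.
  move=> t; apply/negP => Hty; apply: (Zfalse t).
  case/arcE: (Hty) => HtX _ _.
  rewrite inE HtX (arc_in_S Hty Hy) /=; apply/orP; right.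
  by apply/existsP; exists y; rewrite Hty anc_refl.
move=> u Hu Hyu; apply/eqP; apply: contraT => Hne; exfalso; apply: (Zfalse u).
by rewrite inE Hu Hyu Hne.
Qed.

Lemma main_res : (forall x, x \in X -> 2 <= degree c X x) ->
  exists v : V,
    [/\ in_star_with_sink c X S v /\ 2 <= #|S :\ v|,
        (forall x, pivot par c X x <-> x = v),
        (forall x, antenna par c X x <-> x \in S :\ v),
        (forall x, x \in S :\ v -> source_in c X X x) &
        (forall w, w \in X :\: S -> anc par v w)].
Proof.
move=> Hdeg.
have good_out : forall y, y \in S -> hasout y -> good y.
  move=> y; exact: (goodA (ltnSn _)).
case: Hconn => /set0Pn [x0 Hx0] Hcn.
case: (top_ex Hx0) => s Hs _.
have [v [Hv Hnov]] : exists v, v \in S /\ forall w, ~~ arcX v w.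
  case: (boolP (hasout s)) => Hso.
    case/existsP: (Hso) => w Hsw; case/arcE: (Hsw) => _ HwX _.
    case: (top_ex HwX) => z Hz Hzw.
    exists z; split => // w'; apply/negP => Hzw'.
    have [Hin Hd] : good z by apply: good_out Hz _; apply/existsP; exists w'.
    have E := Hd w HwX Hzw; subst w.
    by move: (Hin s); rewrite Hsw.
  exists s; split => // w; apply/negP => Hsw; move/negP: Hso; apply.
  by apply/existsP; exists w.
have HvX := S_X Hv.
set Zv := [set u in X | anq v u || ((u \in S) && Fb u v)].
have HZ : forall u, u \in X -> u \in Zv.
  move=> u Hu; apply: (closed_conn _ (Hcn v u HvX Hu)); last by rewrite inE HvX anc_refl.
  move=> a b; rewrite inE => /andP [HaX /orP [Hva | /andP [HaS HFa]]] Hab.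
  - case/orP: Hab => Hab.
    + case/arcE: (Hab) => _ HbX _.
      case: (top_ex HbX) => t Ht Htb.
      case: (eqVneq t v) => [E|Hne].
        by subst t; rewrite inE HbX Htb.
      have Hvt : v != t by rewrite eq_sym.
      have E := cross Hab Hv Ht Hva Htb Hvt; subst a.
      by move: (Hnov b); rewrite Hab.
    + case/arcE: (Hab) => HbX _ _.
      case: (top_ex HbX) => t Ht Htb.
      case: (eqVneq t v) => [E|Hne].
        by subst t; rewrite inE HbX Htb.
      have E := cross Hab Ht Hv Htb Hva Hne; subst b.
      rewrite inE HbX Ht /=; apply/orP; right; apply/existsP; exists a.
      by rewrite Hab Hva.
  - case/orP: Hab => Hab.
    + case/arcE: (Hab) => _ HbX _.
      case: (top_ex HbX) => t Ht Htb.
      move/existsP: (HFa) => [w1 /andP [Haw1 Hvw1]].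
      have E := L3 Haw1 Hab Hv Ht Hvw1 Htb; subst t.
      by rewrite inE HbX Htb.
    + have [Hin _] : good a.
        apply: good_out HaS _; move/existsP: HFa => [w1 /andP [Haw1 _]].
        by apply/existsP; exists w1.
      by move: (Hin b); rewrite Hab.
have Hleaf : forall y, y \in S :\ v -> good y /\ Fb y v.
  move=> y; rewrite in_setD1 => /andP [Hyv Hy].
  move: (HZ y (S_X Hy)); rewrite inE => /andP [_ /orP [Hvy | /andP [_ HF]]].
    by have := S_anti Hy HvX Hvy => E; rewrite E eqxx in Hyv.
  split => //; apply: good_out Hy _; move/existsP: HF => [w1 /andP [Haw1 _]].
  by apply/existsP; exists w1.
have Harc : forall y, y \in S :\ v -> arcX y v.
  move=> y Hy'; have [_ /existsP [w /andP [Hyw Hvw]]] := Hleaf y Hy'.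
  move: Hy'; rewrite in_setD1 => /andP [Hyv Hy].
  case/arcE: (Hyw) => HyX _ Hc.
  case: (arc_info Hc) => _ HPp _ _ [w0 E].
  move: (Hc); rewrite E inE => /andP [HPw Hww0].
  have key : anq (P y) v.
    case/orP: (anc_comp HPw Hvw) => // H.
    case: (eqVneq v (P y)) => [<-|Hne]; first exact: anc_refl.
    have := anc_step H Hne; rewrite HPp => H2.
    have := S_anti Hy HvX (anc_trans H2 (anc_par y)) => E2.
    by rewrite E2 eqxx in Hyv.
  by rewrite /Defs.arc HyX HvX E inE key (anc_trans Hvw Hww0).
have Hcard : 1 < #|S :\ v|.
  apply: leq_trans (Hdeg v HvX) _; apply: subset_leq_card; apply/subsetP => y.
  rewrite inE => /andP [HyX /orP [Hvy|Hyv]].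
    by move: (Hnov y); rewrite Hvy.
  rewrite in_setD1 (arc_in_S Hyv Hv) andbT; apply/negP => /eqP E; subst y.
  by move: (Hnov v); rewrite Hyv.
exists v; split.
- split => //; split => // x y Hx Hy.
  case: (eqVneq x v) => [->|Hxv] /=; first exact/negbTE.
  case: (eqVneq y v) => [->|Hyv]; first by apply: Harc; rewrite in_setD1 Hxv Hx.
  have Hy' : y \in S :\ v by rewrite in_setD1 Hyv Hy.
  have [[Hin _] _] := Hleaf y Hy'.
  exact/negbTE.
- move=> x; split.
    rewrite /pivot /sink_in => /andP [Hx /forallP H].
    apply/eqP; apply: contraT => Hxv.
    by have := H v; rewrite Hv /= Harc // in_setD1 Hxv Hx.
  move->; rewrite /pivot /sink_in Hv /=; apply/forallP => y; apply/implyP => _.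
  exact: Hnov.
- move=> x; split.
    rewrite /antenna /source_in => /andP [Hx /forallP H].
    rewrite in_setD1 Hx andbT; apply/negP => /eqP E; subst x.
    have : S :\ v != set0 by rewrite -card_gt0; apply: ltnW.
    case/set0Pn => y Hy.
    have := H y; rewrite Harc //.
    by move: Hy; rewrite in_setD1 => /andP [_ ->].
  move=> Hx; have [[Hin _] _] := Hleaf x Hx.
  rewrite /antenna /source_in; move: Hx; rewrite in_setD1 => /andP [_ ->] /=.
  apply/forallP => y; apply/implyP => _; exact: Hin.
- move=> x Hx; have [[Hin _] _] := Hleaf x Hx.
  move: Hx; rewrite in_setD1 => /andP [_ /S_X HxX].
  rewrite /source_in HxX /=; apply/forallP => y; apply/implyP => _; exact: Hin.
move=> w; rewrite in_setD => /andP [HwS HwX].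
case: (top_ex HwX) => t Ht Htw.
case: (eqVneq t v) => [E|Hne].
  subst t; rewrite /anc Htw andbT; apply/negP => /eqP E; subst w.
  by rewrite Hv in HwS.
have Ht' : t \in S :\ v by rewrite in_setD1 Hne Ht.
have [[_ Hd] _] := Hleaf t Ht'.
have E := Hd w HwX Htw; subst w.
by rewrite Ht in HwS.
Qed.

End Main.

Theorem lemma4p7 (V : finType) (r : V) (par lb : V -> V) (c : V -> {set V})
    (X : {set V}) :
  burling_tree r par lb c ->
  connected_graph c X ->
  (forall x, ~ cut_vertex c X x) ->
  (forall x, x \in X -> 2 <= degree c X x) ->
  let S := top_set par X in
  exists v : V,
    [/\ (* (i) G[S] is an in-star with sink v and at least two leaves *)
        in_star_with_sink c X S v /\ 2 <= #|S :\ v|,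
        (* consequently v is the unique pivot and the antennas are S \ v *)
        (forall x, pivot par c X x <-> x = v),
        (forall x, antenna par c X x <-> x \in S :\ v),
        (* (ii) every vertex of S \ v is a source of G *)
        (forall x, x \in S :\ v -> source_in c X X x) &
        (* (iii) the pivot is an ancestor in T of every vertex of V(G) \ S *)
        (forall w, w \in X :\: S -> anc par v w)].
Proof.
move=> Hbt Hconn Hnocut Hdeg S.
exact: (main_res Hbt Hconn Hnocut Hdeg).
Qed.
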